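(* Let $\mathfrak L=(V,E,\lambda,\iota)$ be a $\lambda$-graph system presenting a subshift $\Lambda$. If $\mathfrak L$ is $\lambda$-irreducible then $\mathfrak L$ is $\iota$-irreducible, and if $\mathfrak L$ is $\iota$-irreducible then $\Lambda$ is irreducible.
   Context: A $\lambda$-graph system over a finite alphabet $\Sigma$ is $\mathfrak L=(V,E,\lambda,\iota)$ where $V=\bigsqcup_{l\ge0}V_l$ with $V_l$ finite, $E=\bigsqcup_{l\ge0}E_{l,l+1}$ with each $e\in E_{l,l+1}$ having source $s(e)\in V_l$ and terminal $t(e)\in V_{l+1}$, $\lambda:E\to\Sigma$ a labeling, $\iota:V_{l+1}\to V_l$ surjections, every vertex has an outgoing edge and every vertex of $V_{l+1}$ an incoming edge, and (local property) for $u\in V_{l-1}$, $v\in V_{l+1}$ there is a label-preserving bijection between $\{e\in E_{l,l+1}:t(e)=v,\ \iota(s(e))=u\}$ and $\{e\in E_{l-1,l}:s(e)=u,\ t(e)=\iota(v)\}$. A labeled path is a finite sequence of consecutive edges $e_1,\dots,e_n$ with $e_i\in E_{k+i-1,k+i}$ and $t(e_i)=s(e_{i+1})$; its label is $(\lambda(e_1),\dots,\lambda(e_n))$. The presented subshift $\Lambda$ is the subshift whose admissible words are the labels of labeled paths; a subshift is irreducible if for admissible $\mu,\nu$ there is $\eta$ with $\mu\eta\nu$ admissible. $\iota^n$ denotes the $n$-fold composition of the maps $\iota$. $\mathfrak L$ is $\iota$-irreducible if for any $u,v\in V_l$ and any labeled path $\gamma$ leaving $u$ there exist $n$, a labeled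 path $\eta$ of length $n$ leaving $v$ with $\iota^n(t(\eta))=u$, and a labeled path $\gamma'$ leaving $t(\eta)$ with $\iota^n(t(\gamma'))=t(\gamma)$ and $\lambda(\gamma')=\lambda(\gamma)$. $\mathfrak L$ is $\lambda$-irreducible if for any ordered pair $u,v\in V_l$ there is $L(u,v)\in\mathbb N$ such that for every $w\in V_{l+L(u,v)}$ with $\iota^{L(u,v)}(w)=u$ there is a labeled path $\gamma$ with $s(\gamma)=v$, $t(\gamma)=w$. *)

(* Defs.v *)
From mathcomp Require Import all_boot.
Set Implicit Arguments. Unset Strict Implicit. Unset Printing Implicit Defensive.

(* V l   : the finite vertex set V_l,
   E l   : the finite edge set E_{l,l+1},
   src l : E_{l,l+1} -> V_l,  trm l : E_{l,l+1} -> V_{l+1},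
   lab l : E_{l,l+1} -> Sigma, iota l : V_{l+1} -> V_l.           *)
Record lgs (Sigma : finType) := LGS {
  V : nat -> finType;
  E : nat -> finType;
  src : forall l, E l -> V l;
  trm : forall l, E l -> V l.+1;
  lab : forall l, E l -> Sigma;
  iota : forall l, V l.+1 -> V l;
  iota_surj : forall l (u : V l), exists v : V l.+1, iota v = u;
  out_edge : forall l (u : V l), exists e : E l, src e = u;
  in_edge : forall l (v : V l.+1), exists e : E l, trm e = v;
  (* local property, stated for l+1 in place of l: u in V_l, v in V_{l+2} *)
  local_prop : forall l (u : V l) (v : V l.+2),
    exists f : {e : E l.+1 | trm e = v /\ iota (src e) = u} ->
               {e : E l | src e = u /\ trm e = iota v},
      bijective f /\ forall x, lab (proj1_sig (f x)) = lab (proj1_sig x)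
}.

Section Paths.
Variables (Sigma : finType) (L : lgs Sigma).

Definition VS := {l : nat & V L l}.
Definition ES := {l : nat & E L l}.
Definition vx l (v : V L l) : VS := existT _ l v.
Definition esrc (e : ES) : VS := existT _ (tag e) (src (tagged e)).
Definition etrm (e : ES) : VS := existT _ (tag e).+1 (trm (tagged e)).
Definition elab (e : ES) : Sigma := lab (tagged e).

Fixpoint is_path (x : VS) (p : seq ES) : Prop :=
  match p with
  | [::] => True
  | e :: p' => esrc e = x /\ is_path (etrm e) p'
  end.

Fixpoint pend (x : VS) (p : seq ES) : VS :=
  match p with
  | [::] => x
  | e :: p' => pend (etrm e) p'
  end.

Definition plabel (p : seq ES) : seq Sigma := map elab p.

Unset Implicit Arguments.
Fixpoint iotan (n l : nat) : V L (n + l) -> V L l :=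
  match n return V L (n + l) -> V L l with
  | 0 => fun w => w
  | n'.+1 => fun w => iotan n' l (@iota _ L (n' + l) w)
  end.
Set Implicit Arguments.

Definition admissible (w : seq Sigma) : Prop :=
  exists x p, is_path x p /\ plabel p = w.

Definition subshift_irreducible : Prop :=
  forall mu nu, admissible mu -> admissible nu ->
    exists eta, admissible (mu ++ eta ++ nu).

Definition iota_irreducible : Prop :=
  forall l (u v : V L l) (g : seq ES), is_path (vx u) g ->
    exists n (eta : seq ES) (w : V L (n + l)),
      [/\ is_path (vx v) eta, size eta = n, pend (vx v) eta = vx w,
          iotan n l w = u &
          exists g' : seq ES, exists z : V L (n + (size g + l)),
            [/\ is_path (vx w) g', plabel g' = plabel g,
                pend (vx w) g' = vx z &
                vx (iotan n (size g + l) z) = pend (vx u) g]].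

Definition lambda_irreducible : Prop :=
  forall l (u v : V L l), exists Luv : nat,
    forall w : V L (Luv + l), iotan Luv l w = u ->
      exists g : seq ES, is_path (vx v) g /\ pend (vx v) g = vx w.

End Paths.

(* Main.v *)
From Stdlib Require Import Eqdep_dec PeanoNat.
From mathcomp Require Import all_boot.
Require Import Defs.
Set Implicit Arguments. Unset Strict Implicit.

Section Aux.
Variables (Sigma : finType) (L : lgs Sigma).

Lemma vx_inj k (a b : V L k) : vx a = vx b -> a = b.
Proof. move=> H; exact: (inj_pair2_eq_dec _ Nat.eq_dec _ _ _ _ H). Qed.

Lemma tag_pend (x : VS L) p : is_path x p -> tag (pend x p) = size p + tag x.
Proof.
elim: p x => [|e p IH] x //=.
case=> He Hp; rewrite IH // -He /etrm /esrc /=.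
by rewrite addnS.
Qed.

Lemma is_path_cat (x : VS L) p r : is_path x (p ++ r) <-> is_path x p /\ is_path (pend x p) r.
Proof.
elim: p x => [|e p IH] x /=; first by split => // -[].
rewrite IH; split; [case=> -> [] | case=> [[-> ?] ?]]; by [].
Qed.

Lemma lift1 p : forall k (x : V L k) m (y' : V L m.+1), is_path (vx x) p ->
  pend (vx x) p = vx (iota y') ->
  exists (x' : V L k.+1) p', [/\ iota x' = x, is_path (vx x') p',
     plabel p' = plabel p & pend (vx x') p' = vx y'].
Proof.
elim: p => [|e p IH] k x m y' /=.
- move=> _ H.
  have Hk : k = m by have := f_equal (@projT1 _ _) H.
  subst m; move/vx_inj: H => ->.
  by exists y', [::].
- case=> He Hp Hend.
  destruct e as [l e0].
  rewrite /esrc /= in He.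
  have Hl : l = k := f_equal (@projT1 _ _) He.
  subst l.
  have Hs := vx_inj He.
  have [x1 [p1 [Hi Hp1 Hl1 He1]]] := IH _ (trm e0) _ y' Hp Hend.
  have [f [[g fK gK] flab]] := local_prop x x1.
  pose c : {e : E L k | src e = x /\ trm e = iota x1} := exist _ e0 (conj Hs (esym Hi)).
  have := flab (g c); rewrite gK /=.
  case Eg: (g c) => [e1 [Ht1 Hs1]] /= Hlab.
  exists (src e1), (existT _ k.+1 e1 :: p1).
  split => //=.
  + split => //; rewrite /etrm /= Ht1; exact Hp1.
  + move: Hl1; rewrite /plabel /= => ->; congr (_ :: _); exact: (esym Hlab).
  + by rewrite /etrm /= Ht1.
Qed.

Lemma lift_n n : forall k m (x : V L k) p (y' : V L (n + m)), is_path (vx x) p ->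
  vx (iotan _ L n m y') = pend (vx x) p ->
  exists (x' : V L (n + k)) p', [/\ iotan _ L n k x' = x, is_path (vx x') p',
     plabel p' = plabel p & pend (vx x') p' = vx y'].
Proof.
elim: n => [|n IH] k m x p y' Hp He.
  by exists x, p; split => //; rewrite -He.
have [x1 [p1 [Hi Hp1 Hl1 He1]]] := IH k m x p (iota y') Hp He.
have [x' [p' [Hi' Hp' Hl' He']]] := lift1 Hp1 He1.
exists x', p'; split => //; last by rewrite Hl'.
by rewrite -Hi -Hi'.
Qed.

Lemma iotan_surj n m (y : V L m) : exists z : V L (n + m), iotan _ L n m z = y.
Proof.
elim: n => [|n [z Hz]]; first by exists y.
have [z' Hz'] := iota_surj z.
by exists z'; rewrite -Hz -Hz'.
Qed.

Lemma join (Hio : iota_irreducible L) (x : VS L) P (X : VS L) q :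
  is_path x P -> is_path X q -> tag (pend x P) = tag X ->
  exists eta, admissible L (plabel P ++ eta ++ plabel q).
Proof.
move=> HP.
case E: (pend x P) => [k a].
case: X => [k' b] Hq /= Hkk; subst k'.
have [n [eta [w [Heta _ Hew _ [g' [z [Hg' Hl _ _]]]]]]] := Hio k b a q Hq.
exists (plabel eta), x, (P ++ eta ++ g').
split.
  rewrite is_path_cat; split => //; rewrite E is_path_cat; split; first exact Heta.
  by rewrite Hew.
by move: Hl; rewrite /plabel !map_cat => ->.
Qed.

End Aux.

Theorem lemma2p6 (Sigma : finType) (L : lgs Sigma) :
  (lambda_irreducible L -> iota_irreducible L) /\
  (iota_irreducible L -> subshift_irreducible L).
Proof.
split.
  move=> Hlam l u v g Hg.
  have [N HN] := Hlam l u v.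
  have Ht := tag_pend Hg.
  case Ep: (pend (vx u) g) Ht => [k y] /= Hk; subst k.
  have [z Hz] := iotan_surj N y.
  have [w [g' [Hw Hg' Hlab Hend]]] := @lift_n _ L N l (size g + l) u g z Hg
    (ltac:(by rewrite Hz Ep)).
  have [eta [Heta Hend2]] := HN w Hw.
  exists N, eta, w; split => //.
    have := tag_pend Heta; rewrite Hend2 /= => E.
    by apply/eqP; rewrite -(eqn_add2r l) -E.
  by exists g', z; split => //; rewrite Hz.
move=> Hio mu nu [x [p [Hp <-]]] [x2 [q [Hq <-]]].
case: x Hp => [l1 x0] Hp.
case: x2 Hq => [l2 b] Hq.
case: (leqP (size p + l1) l2) => Hle.
  have Ht := tag_pend Hp.
  case Ep: (pend (vx x0) p) Ht => [k y0] /= Hk; subst k.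
  have [z Hz] := iotan_surj (l2 - (size p + l1)) y0.
  have [x' [p' [_ Hp' Hl' He']]] := @lift_n _ L _ l1 _ x0 p z Hp
    (ltac:(by rewrite Hz Ep)).
  rewrite -Hl'; apply: (join Hio Hp' Hq).
  by rewrite He' /= subnK.
have Ht := tag_pend Hq.
case Eq: (pend (vx b) q) Ht => [k y0] /= Hk; subst k.
have [z Hz] := iotan_surj (size p + l1 - l2) y0.
have [b' [q' [_ Hq' Hl' He']]] := @lift_n _ L _ l2 _ b q z Hq
  (ltac:(by rewrite Hz Eq)).
rewrite -Hl'; apply: (join Hio Hp Hq').
by rewrite (tag_pend Hp) /= subnK // ltnW.
Qed.
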